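(* Let $G$ be a finite group. Then every character in $\mathrm{Irr}(G\mid U(G))$ is fully ramified with respect to $Z(G)$, and $U(G)$ is the largest subgroup of $G$ with this property: if $H\le G$ is any subgroup such that every character in $\mathrm{Irr}(G\mid H)$ is fully ramified with respect to $Z(G)$, then $H\le U(G)$.
   Context: All groups are finite. For a subgroup $H\le G$, $\mathrm{Irr}(G\mid H)$ is the set of $\chi\in\mathrm{Irr}(G)$ with $H\not\le\ker(\chi)$. A character $\chi\in\mathrm{Irr}(G)$ is fully ramified with respect to $Z(G)$ if $\chi_{Z(G)}=\chi(1)\lambda$ for some $\lambda\in\mathrm{Irr}(Z(G))$ and $\chi(1)^2=|G:Z(G)|$ (equivalently, $\chi$ vanishes on $G\setminus Z(G)$). For a normal subgroup $H$ of $G$, let $V(G\mid H)$ be the subgroup generated by all $g\in G$ such that $\chi(g)\neq 0$ for some $\chi\in\mathrm{Irr}(G\mid H)$ (with $V(G\mid 1)=1$). For a normal subgroup $N$ of $G$, let $U(G\mid N)$ be the product of all normal subgroups $H$ of $G$ with $V(G\mid H)\le N$. Define $U(G)=U(G\mid Z(G))$. *)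

(* Defs.v *)
From HB Require Import structures.
From mathcomp Require Import all_boot all_order all_algebra all_fingroup all_solvable all_field all_character.
Set Implicit Arguments. Unset Strict Implicit. Unset Printing Implicit Defensive.
Import GRing.Theory Num.Theory.
Local Open Scope ring_scope.

(* chi in Irr(G | H) : H is not contained in ker chi *)
Definition irr_over (gT : finGroupType) (G : {group gT}) (H : {set gT})
  (i : Iirr G) : bool := ~~ (H \subset cfker 'chi[G]_i).

Definition fully_ramified (gT : finGroupType) (G : {group gT}) (i : Iirr G) : Prop :=
  (exists j : Iirr 'Z(G), 'Res['Z(G)] 'chi[G]_i = 'chi[G]_i 1%g *: 'chi[ 'Z(G)]_j)
  /\ ('chi[G]_i 1%g ^+ 2 = (#|G : 'Z(G)|%g)%:R).

Definition Vsub (gT : finGroupType) (G : {group gT}) (H : {set gT}) : {set gT} :=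
  (<<[set g in G | [exists i : Iirr G, irr_over H i && ('chi[G]_i g != 0%R)]]>>)%g.

Definition Usub (gT : finGroupType) (G : {group gT}) (N : {set gT}) : {set gT} :=
  (<<\bigcup_(H : {group gT} | (H <| G) && (Vsub G H \subset N)) H>>)%g.

Definition Ugrp (gT : finGroupType) (G : {group gT}) : {set gT} := Usub G 'Z(G)%g.

(* Main.v *)
Require Import Defs.
From HB Require Import structures.
From mathcomp Require Import all_boot all_order all_algebra all_fingroup all_solvable all_field all_character.
Local Open Scope group_scope.

Section Helpers.
Import GRing.Theory Num.Theory.
Local Open Scope ring_scope.

Lemma res_center_irr (gT : finGroupType) (G : {group gT}) (i : Iirr G) :
  exists j : Iirr 'Z(G), 'Res['Z(G)] 'chi[G]_i = 'chi[G]_i 1%g *: 'chi[ 'Z(G)]_j.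
Proof.
have sZ: 'Z(G) \subset ('Z('chi_i))%CF by rewrite -cap_cfcenter_irr (bigcap_inf i).
have [xi Lxi Dchi] := cfcenter_Res 'chi_i.
have Lr := cfRes_lin_char 'Z(G) Lxi.
have /irrP[j Dj] := lin_char_irr Lr.
exists j; rewrite -Dj -(cfResRes _ sZ (cfcenter_sub _)) Dchi linearZ //.
Qed.

Lemma sq_iff (gT : finGroupType) (G : {group gT}) (i : Iirr G) :
  ('chi[G]_i 1%g ^+ 2 = (#|G : 'Z(G)|%g)%:R) <-> ('chi_i \in 'CF(G, 'Z(G))).
Proof.
have L := cfnorm_Res_leif 'chi_i (center_sub G).
have [j Dj] := @res_center_irr _ _ i.
rewrite Dj cfdotZl cfdotZr cfdot_irr eqxx mulr1 irr1_degree conjC_nat in L.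
rewrite cfnorm_irr mulr1 -expr2 -irr1_degree in L.
rewrite -(L.2); split; first by move=> ->.
by move/eqP.
Qed.

End Helpers.

Theorem theoremH (gT : finGroupType) (G : {group gT}) :
  (forall i : Iirr G, irr_over (Ugrp G) i -> fully_ramified i) /\
  (forall H : {group gT}, H \subset G ->
     (forall i : Iirr G, irr_over H i -> fully_ramified i) ->
     H \subset Ugrp G).
Proof.
split.
  move=> i notU; split; first exact: res_center_irr.
  apply/sq_iff; apply/cfun_onP => x xZ.
  have [Gx|nGx] := boolP (x \in G); last by rewrite cfun0.
  apply/eqP; apply: contraR notU => nz.
  rewrite /Ugrp /Usub gen_subG; apply/bigcupsP => H /andP[_ sVZ].
  apply: contraR xZ => nHK; apply: (subsetP sVZ); apply: mem_gen.
  rewrite inE Gx; apply/existsP; exists i; rewrite /irr_over nHK nz.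
  done.
move=> H sHG FR.
pose N := (<<class_support H G>>)%G.
have sHN : H \subset N by rewrite sub_gen // sub_class_support.
apply: subset_trans sHN _.
rewrite /Ugrp /Usub; apply: sub_gen; apply: (bigcup_max N) => //.
apply/andP; split.
  by rewrite /normal gen_subG class_support_subG //= norms_gen // class_support_norm.
rewrite /Vsub gen_subG; apply/subsetP => x; rewrite inE.
case/andP => Gx /existsP[i /andP[ovN nz]].
have ovH : irr_over H i.
  apply: contra ovN => sHK.
  by rewrite gen_subG class_support_sub_norm // normal_norm // cfker_normal.
have [_ /sq_iff inCF] := FR i ovH.
apply: contraR nz => xZ.
by move/cfun_onP: inCF => ->.
Qed.
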